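(* Consider the coupled opinion–network system described in the context, and assume in addition that (i) there is a constant $c_\phi>0$ with $\phi(r)>c_\phi$ for all $r\in[-2,2]$, and (ii) there is a constant $c_f>0$ such that $f^+(w)_{ij}>c_f$ for all $i\neq j$ and all $w\in[0,1]^{N\times N}$ with $w_{ij}=0$. Then the population reaches consensus: there exists $x^*\in[-1,1]$ such that $x_i(t)\to x^*$ as $t\to\infty$ for every $i=1,\dots,N$ (equivalently, the opinion diameter $D(t)=\max_{i,j}|x_j(t)-x_i(t)|$ tends to $0$).
   Context: There are $N$ individuals with opinions $x_i(t)\in[-1,1]$ and edge weights $w_{ij}(t)\in[0,1]$, $i,j=1,\dots,N$. The degree is $k_i=\sum_{j=1}^N w_{ij}$. Given an interaction function $\phi:[-2,2]\to[0,1]$ and maps $f^+,f^-:[0,1]^{N\times N}\to\mathbb{R}_{\ge 0}^{N\times N}$, the system is $\frac{dx_i}{dt}=\frac{1}{k_i}\sum_{j\neq i} w_{ij}\,\phi(x_j-x_i)(x_j-x_i)$ for $i=1,\dots,N$; $\frac{dw_{ij}}{dt}=\phi(x_j-x_i)\,f^+(w)_{ij}-\big(1-\phi(x_j-x_i)\big)f^-(w)_{ij}$ for $i\neq j$; $\frac{dw_{ii}}{dt}=0$. Standing assumptions: $\phi$ is Lipschitz continuous, $\phi(r)=\phi(-r)$ for all $r$, and $\phi(0)>0$; initial opinions satisfy $x_1(0)\le x_2(0)\le\dots\le x_N(0)$; $w_{ii}=1$ for all $i$; the initial network $w(0)$ is strongly connected (for all $i,j$ there is a sequence $i=i_0,i_1,\dots,i_m=j$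 with $w_{i_n i_{n+1}}(0)>0$); $f^+$ and $f^-$ are non-negative and Lipschitz continuous; $f^+(w)_{ij}=0$ whenever $w_{ij}=1$; $f^-(w)_{ij}=0$ whenever $w_{ij}=0$. *)

(* Defs.v *)
From HB Require Import structures.
From mathcomp Require Import all_boot all_order all_algebra.
From mathcomp Require Import all_classical all_reals all_analysis.
Set Implicit Arguments. Unset Strict Implicit. Unset Printing Implicit Defensive.
Import Order.TTheory GRing.Theory Num.Theory.
Import numFieldNormedType.Exports.
Local Open Scope ring_scope.

Definition weights (R : realType) (N : nat) := 'I_N -> 'I_N -> R.

Definition in_unit_box (R : realType) (N : nat) (w : weights R N) : Prop :=
  forall i j : 'I_N, 0 <= w i j <= 1.

Definition degree (R : realType) (N : nat) (w : weights R N) (i : 'I_N) : R :=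
  \sum_(j < N) w i j.

Definition opinion_rhs (R : realType) (N : nat) (phi : R -> R)
    (x : 'I_N -> R) (w : weights R N) (i : 'I_N) : R :=
  (degree w i)^-1 *
  \sum_(j < N | j != i) w i j * phi (x j - x i) * (x j - x i).

Definition weight_rhs (R : realType) (N : nat) (phi : R -> R)
    (fp fm : weights R N -> weights R N)
    (x : 'I_N -> R) (w : weights R N) (i j : 'I_N) : R :=
  phi (x j - x i) * fp w i j - (1 - phi (x j - x i)) * fm w i j.

Definition wdist (R : realType) (N : nat) (w v : weights R N) : R :=
  \big[Num.max/0]_(i < N) \big[Num.max/0]_(j < N) `|w i j - v i j|.

(* Main.v *)
Require Import Defs.
From HB Require Import structures.
From mathcomp Require Import all_boot all_order all_algebra.
From mathcomp Require Import all_classical all_reals all_analysis.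
From mathcomp Require Import ring lra.
Import Order.TTheory GRing.Theory Num.Theory.
Import numFieldNormedType.Exports.
Set Implicit Arguments. Unset Strict Implicit. Unset Printing Implicit Defensive.
Local Open Scope classical_set_scope.
Local Open Scope ring_scope.

Section S.
Variable R : realType.

Lemma is_derive_ext (f g : R -> R) (t df : R) :
  (forall s, f s = g s) -> is_derive t 1 f df -> is_derive t 1 g df.
Proof. by move=> fg; have -> : f = g by apply/funext. Qed.

Lemma gronwall (f df : R -> R) (c a b : R) :
  (forall t, a <= t <= b -> is_derive t 1 f (df t)) ->
  (forall t, a <= t <= b -> c * f t <= df t) ->
  forall t, a <= t <= b -> f a * expR (c * (t - a)) <= f t.
Proof.
move=> hd hc t /andP[hat htb].
pose g := fun s => f s * expR (- c * s).
have dg : forall s, a <= s <= b ->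
    is_derive s 1 g (df s * expR (- c * s) + f s * (expR (- c * s) * (- c))).
  move=> s hs.
  have h1 : is_derive s 1 (fun u => - c * u) (- c).
    have H := is_deriveZ (-c) (is_derive_id s (1:R)).
    have H2 := is_derive_ext (g := fun u => - c * u) (fun u => erefl) H.
    by apply: is_derive_eq H2 _; rewrite /GRing.scale /= mulr1.

  have h2 : is_derive s 1 (expR \o (fun u => - c * u)) (expR (- c * s) * (- c)).
    exact: is_derive1_comp.
  have h3 := is_deriveM (hd s hs) h2.
  have h4 := is_derive_ext (g := g) (fun u => erefl) h3.
  apply: is_derive_eq h4 _.
  by rewrite /= /GRing.scale /=; ring.
have gmono : g a <= g t.
  apply: (@ger0_derive1_ndecr _ g a b) => //.
  - move=> s; rewrite in_itv /= => /andP[h1 h2]; apply: ex_derive.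
    by apply: dg; rewrite !ltW.
  - move=> s; rewrite in_itv /= => /andP[h1 h2].
    have hs : a <= s <= b by rewrite !ltW.
    rewrite derive1E; case: (dg s hs) => _ ->.
    have := hc s hs; have := expR_gt0 (- c * s); nra.
  - apply: derivable_within_continuous => s; rewrite in_itv /= => hs.
    by apply: ex_derive; apply: dg.
have -> : f a * expR (c * (t - a)) = g a * expR (c * t).
  by rewrite /g -mulrA -expRD; congr (_ * expR _); ring.
have -> : f t = g t * expR (c * t).
  by rewrite /g -mulrA -expRD (_ : - c * t + c * t = 0) ?expR0 ?mulr1 //; ring.
by apply: ler_wpM2r; first exact: expR_ge0.
Qed.

Lemma exp_convex (A B : R) : expR A * (B - A) <= expR B - expR A.
Proof.
have -> : expR B = expR A * expR (B - A) by rewrite -expRD; congr expR; ring.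
have := expR_ge1Dx (B - A); have := expR_gt0 A; nra.
Qed.

Lemma le_sum_term n (F : 'I_n -> R) i : (forall j, 0 <= F j) -> F i <= \sum_(j < n) F j.
Proof.
move=> h; rewrite (bigD1 i) //= lerDl; apply: sumr_ge0 => j _; exact: h.
Qed.

Lemma deriv_aff (g : R -> R) (s dg a c : R) :
  is_derive s 1 g dg -> is_derive s 1 (fun u => a - g u - c) (- dg).
Proof.
move=> H.
have H1 := is_deriveB (is_deriveB (is_derive_cst a s 1) H) (is_derive_cst c s 1).
have H2 := is_derive_ext (g := fun u => a - g u - c) (fun u => erefl) H1.
by apply: is_derive_eq H2 _; rewrite sub0r subr0.
Qed.

Section Gen.
Variables (N : nat) (f : 'I_N -> R -> R) (b : R -> 'I_N -> 'I_N -> R).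
Hypothesis fd : forall t : R, 0 < t -> forall i : 'I_N,
  is_derive t 1 (f i) (\sum_(j < N) b t i j * (f j t - f i t)).
Hypothesis bb : forall t : R, 0 < t -> forall i j : 'I_N, 0 <= b t i j <= 1.

Lemma inv_up (t1 U : R) : 0 < t1 -> (forall j, f j t1 <= U) ->
  forall t : R, t1 <= t -> forall i, f i t <= U.
Proof.
move=> t1p hU t ht i; rewrite leNgt; apply/negP => hy.
pose F k s := \sum_(j < N) b s k j * (f j s - f k s).
pose C := N%:R * expR (N%:R * (t - t1)).
have C0 : 0 <= C by rewrite /C mulr_ge0 ?expR_ge0.
pose lam := (C + 1) / (f i t - U).
have lam0 : 0 < lam by rewrite /lam divr_gt0 ?subr_gt0 //; lra.
pose G s := \sum_(k < N) expR (lam * (f k s - U)).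
pose dG s := \sum_(k < N) expR (lam * (f k s - U)) * (lam * F k s).
have dGd : forall s : R, 0 < s -> is_derive s 1 G (dG s).
  move=> s s0.
  have hk : forall k, is_derive s 1 (fun u => expR (lam * (f k u - U)))
      (expR (lam * (f k s - U)) * (lam * F k s)).
    move=> k.
    have h1 : is_derive s 1 (fun u => lam * (f k u - U)) (lam * F k s).
      have H := is_deriveZ lam (is_deriveB (fd s0 k) (is_derive_cst U s 1)).
      have H2 := is_derive_ext (g := fun u => lam * (f k u - U)) (fun u => erefl) H.
      by apply: is_derive_eq H2 _; rewrite /GRing.scale /= subr0.
    exact: (is_derive1_comp (f := expR) (g := fun u => lam * (f k u - U))).
  have H := is_derive_sum hk.
  apply: is_derive_ext H => u; rewrite /G; by rewrite fct_sumE.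
have dGle : forall s : R, 0 < s -> dG s <= N%:R * G s.
  move=> s s0; rewrite /dG.
  have hk : forall k, expR (lam * (f k s - U)) * (lam * F k s) <= G s.
    move=> k; rewrite /F mulr_sumr mulr_sumr /G; apply: ler_sum => j _.
    have := exp_convex (lam * (f k s - U)) (lam * (f j s - U)).
    have /andP[b0 b1] := bb s0 k j.
    have ek := expR_gt0 (lam * (f k s - U)).
    have ej := expR_gt0 (lam * (f j s - U)).
    move=> hc.
    have e1 : expR (lam * (f k s - U)) * (lam * (b s k j * (f j s - f k s))) =
      b s k j * (expR (lam * (f k s - U)) * (lam * (f j s - U) - lam * (f k s - U))).
      by ring.
    rewrite e1; nra.
  apply: le_trans (ler_sum _ (fun k _ => hk k)) _.
  by rewrite sumr_const card_ord mulr_natl.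
have gr := @gronwall (fun s => - G s) (fun s => - dG s) N%:R t1 t.
have hGt1 : G t1 <= N%:R.
  apply: (@le_trans _ _ (\sum_(k < N) (1:R))); last by rewrite sumr_const card_ord.
  apply: ler_sum => k _; rewrite expR_le1.
  have := hU k; have := lam0; nra.
have hGt : C + 2 <= G t.
  have H := @le_sum_term N (fun k => expR (lam * (f k t - U))) i (fun k => expR_ge0 _).
  suff h : C + 2 <= expR (lam * (f i t - U)) by exact: le_trans h H.
    have -> : lam * (f i t - U) = C + 1.
      by rewrite /lam divfK // subr_eq0; apply/negP => /eqP h; move: hy; rewrite h ltxx.
    have := expR_ge1Dx (C + 1); lra.
have : - G t1 * expR (N%:R * (t - t1)) <= - G t.
  apply: gr; last by rewrite lexx ht.
  - move=> s /andP[hs1 hs2].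
    have := is_deriveN (dGd s (lt_le_trans t1p hs1)).
    move/(is_derive_ext (g := fun s => - G s) (fun u => erefl)); done.
  - move=> s /andP[hs1 hs2]; have := dGle s (lt_le_trans t1p hs1); lra.
have ex := expR_gt0 (N%:R * (t - t1)).
rewrite /C in hGt; nra.
Qed.
End Gen.

Lemma inv_low N (f : 'I_N -> R -> R) (b : R -> 'I_N -> 'I_N -> R) :
  (forall t : R, 0 < t -> forall i : 'I_N,
    is_derive t 1 (f i) (\sum_(j < N) b t i j * (f j t - f i t))) ->
  (forall t : R, 0 < t -> forall i j : 'I_N, 0 <= b t i j <= 1) ->
  forall (t1 L : R), 0 < t1 -> (forall j, L <= f j t1) ->
  forall t : R, t1 <= t -> forall i, L <= f i t.
Proof.
move=> fd bb t1 L t1p hL t ht i.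
have := @inv_up N (fun i s => - f i s) b _ bb t1 (- L) t1p _ t ht i.
rewrite lerN2; apply.
- move=> s s0 k.
  have H := is_deriveN (fd s s0 k).
  have H2 := is_derive_ext (g := fun u => - f k u) (fun u => erefl) H.
  apply: is_derive_eq H2 _; rewrite -sumrN; apply: eq_bigr => j _; ring.
- by move=> j; rewrite lerN2.
Qed.

Definition kappa (N : nat) (beta : R) :=
  beta * expR (- N%:R) * (1 - expR (- N%:R)) / (2 * N%:R).

Lemma kappa_bounds N beta : (0 < N)%N -> 0 < beta <= 1 ->
  0 < kappa N beta /\ kappa N beta <= 1 / 2.
Proof.
move=> N0 /andP[b0 b1]; rewrite /kappa.
have Nr : 1 <= N%:R :> R by rewrite ler1n.
have e0 := expR_gt0 (- N%:R : R).
have e1 : expR (- N%:R) < 1 :> R by rewrite expR_lt1 oppr_lt0; lra.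
split.
  apply: divr_gt0; last lra.
  apply: mulr_gt0; [exact: mulr_gt0|lra].
rewrite ler_pdivrMr; last lra.
have : beta * expR (- N%:R) <= 1 by nra.
have : 0 <= beta * expR (- N%:R) by nra.
move=> h1 h2.
have : beta * expR (- N%:R) * (1 - expR (- N%:R)) <= 1 by nra.
lra.
Qed.

Lemma contract N (f : 'I_N -> R -> R) (b : R -> 'I_N -> 'I_N -> R) (beta t1 : R) :
  (forall t : R, 0 < t -> forall i : 'I_N,
    is_derive t 1 (f i) (\sum_(j < N) b t i j * (f j t - f i t))) ->
  (forall t : R, 0 < t -> forall i j : 'I_N, 0 <= b t i j <= 1) ->
  (0 < N)%N -> 0 < beta <= 1 -> 0 < t1 ->
  (forall t : R, t1 <= t -> forall i j : 'I_N, i != j -> beta <= b t i j) ->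
  forall m M : R, (forall t : R, t1 <= t -> forall i, m <= f i t <= M) ->
  exists m' M' : R, (forall t : R, t1 + 1 <= t -> forall i, m' <= f i t <= M') /\
     M' - m' <= (1 - kappa N beta) * (M - m).
Proof.
move=> fd bb N0 hbeta t1p bbeta m M hmM.
have [k0 k1] := kappa_bounds N0 hbeta.
have mM : m <= M.
  have /andP[h1 h2] := hmM t1 (lexx _) (Ordinal N0); exact: le_trans h1 h2.
pose mid := (m + M) / 2.
have t1le : t1 <= t1 + 1 by lra.
case: (boolP [exists j, f j t1 <= mid]) => [/existsP[j0 hj0]|/existsPn hall].
  pose D := M - m.
  pose gam := D / 2 * expR (- N%:R).
  have Nr : 1 <= N%:R :> R by rewrite ler1n.
  have eN0 := expR_gt0 (- N%:R : R).
  have eN1 : expR (- N%:R) < 1 :> R by rewrite expR_lt1 oppr_lt0; lra.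
  have gam0 : 0 <= gam by rewrite /gam /D; apply: mulr_ge0; lra.
  have sp : forall s : R, t1 <= s -> 0 < s by move=> s hs; lra.
  have hy0 : forall t : R, t1 <= t <= t1 + 1 -> gam <= M - f j0 t.
    have hd : forall s : R, t1 <= s <= t1 + 1 -> is_derive s 1 (fun s => M - f j0 s - 0)
        (- \sum_(j < N) b s j0 j * (f j s - f j0 s)).
      move=> s /andP[hs _]; apply: deriv_aff; exact: (fd s (sp s hs) j0).
    have hc : forall s : R, t1 <= s <= t1 + 1 -> - N%:R * (M - f j0 s - 0) <=
        - \sum_(j < N) b s j0 j * (f j s - f j0 s).
      move=> s /andP[hs _].
      have : \sum_(j < N) b s j0 j * (f j s - f j0 s) <= \sum_(j < N) (M - f j0 s).
        apply: ler_sum => j _.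
        have /andP[b0 b1] := bb s (sp s hs) j0 j.
        have /andP[_ h1] := hmM s hs j.
        have /andP[_ h2] := hmM s hs j0.
        nra.
      rewrite sumr_const card_ord -mulr_natl; nra.
    move=> t /andP[ht1 ht2].
    have H := @gronwall _ _ _ _ _ hd hc t.
    rewrite ht1 ht2 !subr0 in H; have {}H := H isT.
    have e2 : expR (- N%:R) <= expR (- N%:R * (t - t1)).
      by rewrite ler_expR; nra.
    have hj0' : D / 2 <= M - f j0 t1 by rewrite /D; move: hj0; rewrite /mid; lra.
    apply: (le_trans _ H); rewrite /gam.
    apply: ler_pM => //. all: try (rewrite /D; lra). all: try exact: ltW.
  pose c0 := beta * gam / N%:R.
  have Nn0 : N%:R != 0 :> R by rewrite pnatr_eq0 -lt0n.
  have hb0 : 0 < beta by case/andP: hbeta.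
  have hb1 : beta <= 1 by case/andP: hbeta.
  have hyi : forall i, i != j0 -> c0 * (1 - expR (- N%:R)) <= M - f i (t1 + 1).
    move=> i ij0.
    have hd : forall s : R, t1 <= s <= t1 + 1 -> is_derive s 1 (fun s => M - f i s - c0)
        (- \sum_(j < N) b s i j * (f j s - f i s)).
      move=> s /andP[hs _]; apply: deriv_aff; exact: (fd s (sp s hs) i).
    have hc : forall s : R, t1 <= s <= t1 + 1 -> - N%:R * (M - f i s - c0) <=
        - \sum_(j < N) b s i j * (f j s - f i s).
      move=> s /andP[hs hs'].
      have hyj0 := hy0 s (introT andP (conj hs hs')).
      have /andP[_ hfi] := hmM s hs i.
      have : \sum_(j < N) b s i j * (f j s - f i s) <= \sum_(j < N) (M - f i s) - beta * gam.
        rewrite (bigD1 j0) //= [X in _ <= X - _](bigD1 j0) //=.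
        have : \sum_(j < N | j != j0) b s i j * (f j s - f i s) <=
               \sum_(j < N | j != j0) (M - f i s).
          apply: ler_sum => j _.
          have /andP[b0 b1] := bb s (sp s hs) i j.
          have /andP[_ h1] := hmM s hs j.
          nra.
        have : b s i j0 * (f j0 s - f i s) <= M - f i s - beta * gam.
          have /andP[b0 b1] := bb s (sp s hs) i j0.
          have bj := bbeta s hs i j0 ij0.
          case: (lerP 0 (f j0 s - f i s)) => hz; nra.
        lra.
      rewrite sumr_const card_ord -mulr_natl.
      have : N%:R * c0 = beta * gam by rewrite /c0 mulrC divfK.
      nra.
    have H := @gronwall _ _ _ _ _ hd hc (t1 + 1).
    rewrite t1le lexx (_ : t1 + 1 - t1 = 1) ?mulr1 in H; last by ring.
    have {}H := H isT.
    have hfi : 0 <= M - f i t1 by have /andP[_ h] := hmM t1 (lexx _) i; lra.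
    have c00 : 0 <= c0 by rewrite /c0; apply: divr_ge0; [nra | lra].
    nra.
  have kD : kappa N beta * D = c0 * (1 - expR (- N%:R)).
    by rewrite /kappa /c0 /gam; field.
  have c0g : c0 <= gam.
    rewrite /c0 ler_pdivrMr; last lra.
    nra.
  have c00 : 0 <= c0 by rewrite /c0; apply: divr_ge0; [nra | lra].
  have hyj0 : c0 * (1 - expR (- N%:R)) <= M - f j0 (t1 + 1).
    have := hy0 (t1 + 1); rewrite t1le lexx => /(_ isT); nra.
  exists m, (M - kappa N beta * D); split; last by rewrite /D le_eqVlt; apply/orP; left; apply/eqP; ring.
  move=> t ht i; apply/andP; split.
    by have /andP[] := hmM t (le_trans t1le ht) i.
  apply: (@inv_up N f b fd bb (t1 + 1) _ _ _ t ht i); first lra.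
  move=> j; rewrite kD.
  case: (eqVneq j j0) => [->|hj]; first lra.
  have := hyi j hj; lra.
exists mid, M; split; last by rewrite /mid; nra.
move=> t ht i; apply/andP; split.
  apply: (@inv_low N f b fd bb t1 mid t1p _ t (le_trans t1le ht) i).
  by move=> j; have := hall j; rewrite -ltNge => /ltW.
by have /andP[] := hmM t (le_trans t1le ht) i.
Qed.

Lemma deriv_sub (g : R -> R) (s dg c : R) :
  is_derive s 1 g dg -> is_derive s 1 (fun u => g u - c) dg.
Proof.
move=> H.
have H1 := is_deriveB H (is_derive_cst c s 1).
have H2 := is_derive_ext (g := fun u => g u - c) (fun u => erefl) H1.
by apply: is_derive_eq H2 _; rewrite subr0.
Qed.

Lemma wdist_single N (v : weights R N) (i j : 'I_N) : 0 <= v i j ->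
  0 <= wdist v (fun p q => if (p == i) && (q == j) then 0 else v p q) <= v i j.
Proof.
move=> h; set u := (fun p q => _); apply/andP; split.
  rewrite /wdist; exact: bigmax_ge_id.
rewrite /wdist; apply: bigmax_le => // p _; apply: bigmax_le => // q _.
rewrite /u; case: ifP => [/andP[/eqP -> /eqP ->]|_].
  by rewrite subr0 ger0_norm.
by rewrite subrr normr0.
Qed.

Lemma w_lower N (phi : R -> R) (fp fm : weights R N -> weights R N)
  (x : R -> 'I_N -> R) (w : R -> weights R N) :
  (forall r : R, -2 <= r <= 2 -> 0 <= phi r <= 1) ->
  (forall v : weights R N, in_unit_box v -> forall i j, 0 <= fm v i j) ->
  (exists L : R, forall v u : weights R N, in_unit_box v -> in_unit_box u ->
     forall i j, `|fp v i j - fp u i j| <= L * wdist v u) ->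
  (exists L : R, forall v u : weights R N, in_unit_box v -> in_unit_box u ->
     forall i j, `|fm v i j - fm u i j| <= L * wdist v u) ->
  (forall v : weights R N, in_unit_box v -> forall i j, v i j = 0 -> fm v i j = 0) ->
  (exists cphi : R, 0 < cphi /\ forall r : R, -2 <= r <= 2 -> cphi < phi r) ->
  (exists cf : R, 0 < cf /\ forall v : weights R N, in_unit_box v ->
     forall i j : 'I_N, i != j -> v i j = 0 -> cf < fp v i j) ->
  (forall t : R, 0 <= t -> forall i, -1 <= x t i <= 1) ->
  (forall t : R, 0 <= t -> in_unit_box (w t)) ->
  (forall t : R, 0 < t -> forall i j, i != j ->
     is_derive t 1 (fun s => w s i j) (weight_rhs phi fp fm (x t) (w t) i j)) ->
  exists delta : R, 0 < delta /\
    forall t : R, 2 <= t -> forall i j, i != j -> delta <= w t i j.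
Proof.
move=> phib fm0 [L1 hL1] [L2 hL2] fm00 [cphi [cphi0 hcphi]] [cf [cf0 hcf]] xb wb wd.
pose B := `|L1| + `|L2| + 1.
pose a := cphi * cf.
have B0 : 0 < B by rewrite /B; have := normr_ge0 L1; have := normr_ge0 L2; lra.
have a0 : 0 < a by rewrite /a mulr_gt0.
have eB0 := expR_gt0 (- B).
have eB1 : expR (- B) < 1 by rewrite expR_lt1; lra.
have aB0 : 0 < a / B by rewrite divr_gt0.
exists (a / B * (1 - expR (- B))); split; first by apply: mulr_gt0; lra.
move=> t ht i j ij.
have hd : forall s : R, 1 <= s <= t -> is_derive s 1 (fun s => w s i j - a / B)
    (weight_rhs phi fp fm (x s) (w s) i j).
  move=> s /andP[hs _]; apply: deriv_sub; apply: wd => //; lra.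
have hc : forall s : R, 1 <= s <= t -> - B * (w s i j - a / B) <=
    weight_rhs phi fp fm (x s) (w s) i j.
  move=> s /andP[hs _].
  have s0 : 0 <= s by lra.
  have wbox := wb s s0.
  have /andP[w0 w1] := wbox i j.
  have /andP[d0 d1] := wdist_single w0.
  set u := (fun p q => _) in d0 d1.
  have ubox : in_unit_box u.
    move=> p q; rewrite /u; case: ifP => _; [by rewrite lexx ler01 | exact: wbox].
  have uij : u i j = 0 by rewrite /u !eqxx.
  have fpu := hcf u ubox i j ij uij.
  have fmu := fm00 u ubox i j uij.
  have hp := hL1 _ _ wbox ubox i j.
  have hm := hL2 _ _ wbox ubox i j.
  have L1w : L1 * wdist (w s) u <= `|L1| * w s i j.
    apply: (le_trans (y := `|L1| * wdist (w s) u)).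
      by apply: ler_wpM2r => //; exact: ler_norm.
    by apply: ler_wpM2l => //; exact: normr_ge0.
  have L2w : L2 * wdist (w s) u <= `|L2| * w s i j.
    apply: (le_trans (y := `|L2| * wdist (w s) u)).
      by apply: ler_wpM2r => //; exact: ler_norm.
    by apply: ler_wpM2l => //; exact: normr_ge0.
  have fpl : cf - `|L1| * w s i j <= fp (w s) i j.
    have := ler_norm (fp u i j - fp (w s) i j); rewrite distrC; lra.
  have fmu2 : fm (w s) i j <= `|L2| * w s i j.
    have := ler_norm (fm (w s) i j - fm u i j); rewrite fmu in hm *; lra.
  have fmw0 := fm0 _ wbox i j.
  have xr : -2 <= x s j - x s i <= 2.
    have := xb s s0 i; have := xb s s0 j => /andP[h1 h2] /andP[h3 h4].
    apply/andP; split; lra.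
  have /andP[p0 p1] := phib _ xr.
  have pc := hcphi _ xr.
  rewrite /weight_rhs.
  set P := phi (x s j - x s i) in p0 p1 pc *.
  have n1 := normr_ge0 L1; have n2 := normr_ge0 L2.
  have e1 : P * cf >= cphi * cf by nra.
  have e2 : P * fp (w s) i j >= P * (cf - `|L1| * w s i j) by nra.
  have Lw : 0 <= `|L1| * w s i j by apply: mulr_ge0.
  have e3 : P * (`|L1| * w s i j) <= `|L1| * w s i j by nra.
  have e4 : (1 - P) * fm (w s) i j <= fm (w s) i j by nra.
  have e5 : - B * (w s i j - a / B) = a - B * w s i j.
    by field; rewrite gt_eqF.
  rewrite e5 /B /a; nra.
have H := @gronwall _ _ _ _ _ hd hc t.
have t1 : 1 <= t <= t by rewrite lexx andbT; lra.
have {}H := H t1.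
have w10 : 0 <= w 1 i j by have /andP[] := wb 1 ler01 i j.
have E : expR (- B * (t - 1)) <= expR (- B) by rewrite ler_expR; nra.
have E0 := expR_gt0 (- B * (t - 1)).
nra.
Qed.
End S.

Unset Implicit Arguments.
Unset Strict Implicit.
Theorem proposition1 (R : realType) (N : nat)
  (phi : R -> R) (fp fm : weights R N -> weights R N)
  (x : R -> 'I_N -> R) (w : R -> weights R N) :
  (* phi : [-2,2] -> [0,1], Lipschitz, even, phi 0 > 0 *)
  (forall r : R, -2 <= r <= 2 -> 0 <= phi r <= 1) ->
  (exists L : R, forall r s : R, -2 <= r <= 2 -> -2 <= s <= 2 ->
     `|phi r - phi s| <= L * `|r - s|) ->
  (forall r : R, -2 <= r <= 2 -> phi r = phi (- r)) ->
  0 < phi 0 ->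
  (* f^+, f^- : nonnegative, Lipschitz on [0,1]^{NxN} *)
  (forall v : weights R N, in_unit_box v -> forall i j, 0 <= fp v i j) ->
  (forall v : weights R N, in_unit_box v -> forall i j, 0 <= fm v i j) ->
  (exists L : R, forall v u : weights R N, in_unit_box v -> in_unit_box u ->
     forall i j, `|fp v i j - fp u i j| <= L * wdist v u) ->
  (exists L : R, forall v u : weights R N, in_unit_box v -> in_unit_box u ->
     forall i j, `|fm v i j - fm u i j| <= L * wdist v u) ->
  (forall v : weights R N, in_unit_box v -> forall i j, v i j = 1 -> fp v i j = 0) ->
  (forall v : weights R N, in_unit_box v -> forall i j, v i j = 0 -> fm v i j = 0) ->
  (* additional hypotheses (i) and (ii) *)
  (exists cphi : R, 0 < cphi /\ forall r : R, -2 <= r <= 2 -> cphi < phi r) ->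
  (exists cf : R, 0 < cf /\ forall v : weights R N, in_unit_box v ->
     forall i j : 'I_N, i != j -> v i j = 0 -> cf < fp v i j) ->
  (* (x, w) is a solution on [0, +oo) with values in [-1,1] and [0,1] *)
  (forall t : R, 0 <= t -> forall i, -1 <= x t i <= 1) ->
  (forall t : R, 0 <= t -> in_unit_box (w t)) ->
  (forall t : R, 0 <= t -> forall i, w t i i = 1) ->
  (forall i, (fun s => x s i) @ 0^'+ --> x 0 i) ->
  (forall i j, (fun s => w s i j) @ 0^'+ --> w 0 i j) ->
  (forall t : R, 0 < t -> forall i,
     is_derive t 1 (fun s => x s i) (opinion_rhs phi (x t) (w t) i)) ->
  (forall t : R, 0 < t -> forall i j, i != j ->
     is_derive t 1 (fun s => w s i j) (weight_rhs phi fp fm (x t) (w t) i j)) ->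
  (* initial conditions *)
  (forall i j : 'I_N, (i <= j)%N -> x 0 i <= x 0 j) ->
  (forall i j : 'I_N, connect (fun a b => 0 < w 0 a b) i j) ->
  (* consensus *)
  exists xs : R, -1 <= xs <= 1 /\
    forall i : 'I_N, x t i @[t --> +oo] --> xs.

Proof.
move=> phib _ _ _ fp0 fm0 Lfp Lfm _ fm00 hcphi hcf xb wb wii _ _ xd wd _ _.
have [N0|N0] := posnP N.
  exists 0; split; first by apply/andP; split; lra.
  by move=> i; have := ltn_ord i; rewrite {2}N0.
have [delta [d0 hdelta]] := w_lower phib fm0 Lfp Lfm fm00 hcphi hcf xb wb wd.
have [cphi [cphi0 hcp]] := hcphi.
pose f i s := x s i.
pose b t i j := (degree (w t) i)^-1 * (w t i j * phi (x t j - x t i)).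
have xr : forall t : R, 0 <= t -> forall i j, -2 <= x t j - x t i <= 2.
  move=> t t0 i j; have := xb t t0 i; have := xb t t0 j => /andP[h1 h2] /andP[h3 h4].
  apply/andP; split; lra.
have kge : forall t : R, 0 <= t -> forall i j, w t i j <= degree (w t) i.
  move=> t t0 i j; rewrite /degree.
  apply: (le_sum_term (F := fun j => w t i j)) => k.
  by have /andP[] := wb t t0 i k.
have k1 : forall t : R, 0 <= t -> forall i, 1 <= degree (w t) i.
  by move=> t t0 i; rewrite -(wii t t0 i); exact: kge.
have kN : forall t : R, 0 <= t -> forall i, degree (w t) i <= N%:R.
  move=> t t0 i; rewrite /degree.
  apply: (@le_trans _ _ (\sum_(k < N) (1:R))); last by rewrite sumr_const card_ord.
  by apply: ler_sum => k _; have /andP[] := wb t t0 i k.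
have fd : forall t : R, 0 < t -> forall i : 'I_N,
    is_derive t 1 (f i) (\sum_(j < N) b t i j * (f j t - f i t)).
  move=> t t0 i; apply: is_derive_eq (xd t t0 i) _.
  rewrite /opinion_rhs /b /f mulr_sumr [RHS](bigD1 i) //= subrr mulr0 add0r.
  by apply: eq_bigr => j _; ring.
have bb : forall t : R, 0 < t -> forall i j : 'I_N, 0 <= b t i j <= 1.
  move=> t t0 i j; have t0' := ltW t0.
  have /andP[p0 p1] := phib _ (xr t t0' i j).
  have /andP[w0 w1] := wb t t0' i j.
  have := kge t t0' i j; have := k1 t t0' i => hk1 hk.
  rewrite /b; apply/andP; split.
    by apply: mulr_ge0; [rewrite invr_ge0; lra | nra].
  rewrite mulrC ler_pdivrMr; last lra.
  nra.
pose beta := Num.min (delta * cphi / N%:R) 1.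
have hbeta : 0 < beta <= 1.
  apply/andP; split; last by rewrite ge_min lexx orbT.
  rewrite lt_min ltr01 andbT; apply: divr_gt0; [exact: mulr_gt0 | by rewrite ltr0n].
have bbeta : forall t : R, 2 <= t -> forall i j : 'I_N, i != j -> beta <= b t i j.
  move=> t t2 i j ij; have t0' : 0 <= t by lra.
  rewrite ge_min; apply/orP; left.
  have /andP[p0 p1] := phib _ (xr t t0' i j).
  have pc := hcp _ (xr t t0' i j).
  have wd' := hdelta t t2 i j ij.
  have := kN t t0' i; have := k1 t t0' i => hk1 hkN.
  have Nr : 0 < N%:R :> R by rewrite ltr0n.
  apply: (@le_trans _ _ (w t i j * phi (x t j - x t i) / N%:R)).
    by rewrite ler_pM2r ?invr_gt0 //; nra.
  rewrite /b [X in _ <= X]mulrC; apply: ler_wpM2l; first nra.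
  by rewrite lef_pV2 ?posrE //; lra.
pose kap := kappa N beta.
have [kp0 kp1] : 0 < kap /\ kap <= 1 / 2 := kappa_bounds N0 hbeta.
pose valid m M := exists t0 : R, 2 <= t0 /\
  forall t : R, t0 <= t -> forall i, m <= x t i <= M.
have v0 : valid (-1) 1 by exists 2; split => // t ht i; apply: xb; lra.
have step : forall m M, valid m M ->
    exists m' M', valid m' M' /\ M' - m' <= (1 - kap) * (M - m).
  move=> m M [t0 [t02 h]].
  have t0p : 0 < t0 by lra.
  have [m' [M' [h' hw]]] := @contract R N f b beta t0 fd bb N0 hbeta t0p
    (fun t ht => bbeta t (le_trans t02 ht)) m M h.
  exists m', M'; split => //; exists (t0 + 1); split; [lra | exact: h'].
have iter : forall n : nat, exists m M, valid m M /\ M - m <= 2 * (1 - kap) ^+ n.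
  elim => [|n [m [M [hv hw]]]].
    by exists (-1), 1; split; last by rewrite expr0; lra.
  have [m' [M' [hv' hw']]] := step m M hv.
  exists m', M'; split => //; rewrite exprS.
  have : 0 <= 1 - kap by lra.
  nra.
have cross : forall m1 M1 m2 M2, valid m1 M1 -> valid m2 M2 -> m1 <= M2.
  move=> m1 M1 m2 M2 [t1 [_ h1]] [t2 [_ h2]].
  have l1 : t1 <= Num.max t1 t2 by rewrite le_max lexx.
  have l2 : t2 <= Num.max t1 t2 by rewrite le_max lexx orbT.
  have /andP[a _] := h1 _ l1 (Ordinal N0).
  have /andP[_ c] := h2 _ l2 (Ordinal N0).
  exact: le_trans a c.
pose S := [set m | exists M, valid m M].
have hS : has_sup S.
  split; first by exists (-1); exists 1.
  by exists 1 => m [M hv]; exact: cross hv v0.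
pose xs := sup S.
have lo : forall m M, valid m M -> m <= xs.
  by move=> m M hv; apply: (sup_upper_bound hS); exists M.
have hi : forall m M, valid m M -> xs <= M.
  move=> m M hv; apply: ge_sup; first exact: hS.1.
  by move=> m' [M' hv']; exact: cross hv' hv.
exists xs; split; first by apply/andP; split; [exact: lo v0 | exact: hi v0].
move=> i; apply/cvgrPdist_le => eps eps0.
have q1 : `|1 - kap| < 1 by rewrite ger0_norm; lra.
have := cvg_expr q1; move/cvgrPdist_le => /(_ (eps / 2)) H.
have [n0 _ Hn] := H (ltac:(lra)).
have := Hn n0 (leqnn n0); rewrite sub0r normrN ger0_norm; last first.
  by apply: exprn_ge0; lra.
move=> hq.
have [m [M [hv hw]]] := iter n0.
have hlo := lo m M hv; have hhi := hi m M hv.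
case: hv => t0 [t02 hv].
apply: filterS (nbhs_pinfty_ge (num_real t0)) => t ht.
have /andP[a c] := hv t ht i.
rewrite ler_norml; apply/andP; split; lra.
Qed.
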